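(* For the two-pathogen model described in the context with no spillover ($s=0$) and positive parameters, if $\mathcal{R}_{0,A}>1$ and $\mathcal{R}_{0,B}>1$, then the endemic equilibrium $(S_A,I_A,\widetilde I_A,S_B,I_B,\widetilde I_B)=\bigl(1-\bar I_A-\tfrac{\tau_R}{\tau_I}\bar I_A,\ \bar I_A,\ \bar I_A,\ 1-\bar I_B-\tfrac{\tau_R}{\tau_I}\bar I_B,\ \bar I_B,\ \bar I_B\bigr)$ of the reduced system is locally asymptotically stable.
   Context: Model with no spillover: for $i\in\{A,B\}$, state variables $S_i,I_i,R_i,\widetilde I_i$ satisfy $\dot S_i=-\beta_{0,i}e^{-k\widetilde I_i} S_iI_i+R_i/\tau_R$, $\dot I_i=\beta_{0,i}e^{-k\widetilde I_i}S_iI_i-I_i/\tau_I$, $\dot R_i=I_i/\tau_I-R_i/\tau_R$, $\dot{\widetilde I}_i=(I_i-\widetilde I_i)/\tau_P$, with $S_i+I_i+R_i=1$. All parameters $\beta_{0,A},\beta_{0,B},\tau_I,\tau_R,\tau_P,k$ are positive. $\mathcal{R}_{0,i}=\beta_{0,i}\tau_I$. For $\mathcal{R}_{0,i}>1$, $\bar I_i$ denotes the unique positive solution of $e^{kI}=\beta_{0,i}\tau_I-\beta_{0,i}(\tau_I+\tau_R)I$. The reduced system is obtained by substituting $R_i=1-S_i-I_i$ and keeping only the equations for $S_i,I_i,\widetilde I_i$. Locally asymptotically stable means all eigenvalues of the Jacobian of the reduced system at the equilibrium have negative real part. *)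

(* Defs.v *)
From HB Require Import structures.
From mathcomp Require Import all_boot all_order all_algebra.
From mathcomp Require Import all_classical all_reals all_analysis.
From mathcomp Require Import complex.
Set Implicit Arguments. Unset Strict Implicit. Unset Printing Implicit Defensive.
Import Order.TTheory GRing.Theory Num.Theory.
Local Open Scope ring_scope.

(* Right-hand sides of the reduced one-pathogen system, R = 1 - S - I. *)
Definition dS {R : realType} (beta tauR k S I It : R) : R :=
  - (beta * expR (- (k * It)) * S * I) + (1 - S - I) / tauR.
Definition dI {R : realType} (beta tauI k S I It : R) : R :=
  beta * expR (- (k * It)) * S * I - I / tauI.
Definition dIt {R : realType} (tauP I It : R) : R := (I - It) / tauP.

Definition field {R : realType} (betaA betaB tauI tauR tauP k : R)
  (x : 'rV[R]_6) : 'rV[R]_6 :=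
  let SA := x ord0 (inord 0) in let IA := x ord0 (inord 1) in
  let ItA := x ord0 (inord 2) in let SB := x ord0 (inord 3) in
  let IB := x ord0 (inord 4) in let ItB := x ord0 (inord 5) in
  \row_(i < 6)
    [:: dS betaA tauR k SA IA ItA; dI betaA tauI k SA IA ItA; dIt tauP IA ItA;
        dS betaB tauR k SB IB ItB; dI betaB tauI k SB IB ItB; dIt tauP IB ItB]`_i.

Definition jacobian {R : realType} (f : 'rV[R]_6 -> 'rV[R]_6) (x : 'rV[R]_6)
  : 'M[R]_6 :=
  \matrix_(i < 6, j < 6)
     derive1 (fun t : R => f (x + t *: delta_mx ord0 j) ord0 i) 0.

Definition all_eigs_neg_re {R : realType} (A : 'M[R]_6) : Prop :=
  forall z : R[i], eigenvalue (map_mx (fun a : R => (a%:C)%C) A) z -> complex.Re z < 0.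

Definition loc_asymp_stable {R : realType} (f : 'rV[R]_6 -> 'rV[R]_6)
  (x : 'rV[R]_6) : Prop := all_eigs_neg_re (jacobian f x).

Definition endemic_eq {R : realType} (tauI tauR IA IB : R) : 'rV[R]_6 :=
  \row_(i < 6)
    [:: 1 - IA - tauR / tauI * IA; IA; IA; 1 - IB - tauR / tauI * IB; IB; IB]`_i.

(* Main.v *)
Require Import Defs.
From HB Require Import structures.
From mathcomp Require Import all_boot all_order all_algebra.
From mathcomp Require Import all_classical all_reals all_analysis.
From mathcomp Require Import complex.
From mathcomp Require Import ring lra.
Import Order.TTheory GRing.Theory Num.Theory.
Local Open Scope ring_scope.

Section S.
Variable R : realType.
Implicit Types (f g : R -> R) (x df dg : R).

Lemma isdD f g x df dg : is_derive x 1 f df -> is_derive x 1 g dg ->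
  is_derive x 1 (fun t => f t + g t) (df + dg).
Proof. move=> ? ?; exact: (is_deriveD (f:=f) (g:=g)). Qed.
Lemma isdB f g x df dg : is_derive x 1 f df -> is_derive x 1 g dg ->
  is_derive x 1 (fun t => f t - g t) (df - dg).
Proof. move=> ? ?; exact: (is_deriveB (f:=f) (g:=g)). Qed.
Lemma isdN f x df : is_derive x 1 f df ->
  is_derive x 1 (fun t => - f t) (- df).
Proof. move=> ?; exact: (is_deriveN (f:=f)). Qed.
Lemma isdM f g x df dg : is_derive x 1 f df -> is_derive x 1 g dg ->
  is_derive x 1 (fun t => f t  *  g t) (f x  *  dg + g x  *  df).
Proof. move=> ? ?; exact: (is_deriveM (f:=f) (g:=g)). Qed.
Lemma isdC x (a : R) : is_derive x 1 (fun _ => a) 0.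
Proof. exact: (is_derive_cst a). Qed.
Lemma isdI x : is_derive x 1 (fun t : R => t) 1.
Proof. exact: (is_derive_id x 1). Qed.
Lemma isdE f x df : is_derive x 1 f df ->
  is_derive x 1 (fun t => expR (f t)) (expR (f x)  *  df).
Proof. move=> ?; exact: (is_derive1_comp (f:=expR) (g:=f)). Qed.
Ltac isd := repeat first [ apply: isdC | apply: isdI | apply: isdE | apply: isdN
  | apply: isdB | apply: isdD | apply: isdM ].

Lemma der_dS b tR k s i it ds di dit :
 derive1 (fun t : R => Defs.dS b tR k (s + t * ds) (i + t * di) (it + t * dit)) 0 =
 (-(b * expR(-(k * it)) * i) - tR^-1) * ds + (-(b * expR(-(k * it)) * s) - tR^-1) * di
   + (b * expR(-(k * it)) * s * i * k) * dit.
Proof.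
rewrite derive1E; apply: derive_val; apply: is_derive_eq.
  rewrite /Defs.dS; isd.
rewrite /GRing.scale /= !(mul0r, addr0). ring.
Qed.
Lemma der_dI b tI k s i it ds di dit :
 derive1 (fun t : R => Defs.dI b tI k (s + t * ds) (i + t * di) (it + t * dit)) 0 =
 (b * expR(-(k * it)) * i) * ds + (b * expR(-(k * it)) * s - tI^-1) * di
   + (-(b * expR(-(k * it)) * s * i * k)) * dit.
Proof.
rewrite derive1E; apply: derive_val; apply: is_derive_eq.
  rewrite /Defs.dI; isd.
rewrite /GRing.scale /= !(mul0r, addr0). ring.
Qed.

Lemma der_dIt tP i it di dit :
 derive1 (fun t : R => Defs.dIt tP (i + t * di) (it + t * dit)) 0 =
 tP^-1 * di + (- tP^-1) * dit.
Proof.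
rewrite derive1E; apply: derive_val; apply: is_derive_eq.
  rewrite /Defs.dIt; isd.
rewrite /GRing.scale /= !(mul0r, addr0). ring.
Qed.

Definition blk (b tI tR tP k S I It : R) (m n : nat) : R :=
  match m, n with
  | 0, 0 => -(b * expR(-(k * It)) * I) - tR^-1
  | 0, 1 => -(b * expR(-(k * It)) * S) - tR^-1
  | 0, _ => b * expR(-(k * It)) * S * I * k
  | 1, 0 => b * expR(-(k * It)) * I
  | 1, 1 => b * expR(-(k * It)) * S - tI^-1
  | 1, _ => -(b * expR(-(k * It)) * S * I * k)
  | _, 0 => 0
  | _, 1 => tP^-1
  | _, _ => - tP^-1
  end.

Definition Jn (bA bB tI tR tP k : R) (x : 'rV[R]_6) (i j : nat) : R :=
  if (i < 3)%N then (if (j < 3)%N then blk bA tI tR tP k (x ord0 (inord 0)) (x ord0 (inord 1)) (x ord0 (inord 2)) i j else 0)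
  else if (j < 3)%N then 0 else blk bB tI tR tP k (x ord0 (inord 3)) (x ord0 (inord 4)) (x ord0 (inord 5)) (i - 3)%N (j - 3)%N.

Lemma inordE m (j : 'I_6) : (m < 6)%N -> (inord m == j) = (m == val j).
Proof. by move=> h; rewrite -val_eqE /= inordK. Qed.

Lemma jacE bA bB tI tR tP k (x : 'rV[R]_6) (i j : 'I_6) :
  Defs.jacobian (Defs.field bA bB tI tR tP k) x i j = Jn bA bB tI tR tP k x i j.
Proof.
rewrite /Defs.jacobian mxE.
have Hy t m : (x + t *: delta_mx ord0 j) ord0 m = x ord0 m + t * (m == j)%:R.
  by rewrite !mxE eqxx.
have -> : (fun t => Defs.field bA bB tI tR tP k (x + t *: delta_mx ord0 j) ord0 i) =
  (fun t => nth 0 [:: Defs.dS bA tR k (x ord0 (inord 0) + t * (inord 0 == j)%:R)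
        (x ord0 (inord 1) + t * (inord 1 == j)%:R) (x ord0 (inord 2) + t * (inord 2 == j)%:R);
      Defs.dI bA tI k (x ord0 (inord 0) + t * (inord 0 == j)%:R)
        (x ord0 (inord 1) + t * (inord 1 == j)%:R) (x ord0 (inord 2) + t * (inord 2 == j)%:R);
      Defs.dIt tP (x ord0 (inord 1) + t * (inord 1 == j)%:R) (x ord0 (inord 2) + t * (inord 2 == j)%:R);
      Defs.dS bB tR k (x ord0 (inord 3) + t * (inord 3 == j)%:R)
        (x ord0 (inord 4) + t * (inord 4 == j)%:R) (x ord0 (inord 5) + t * (inord 5 == j)%:R);
      Defs.dI bB tI k (x ord0 (inord 3) + t * (inord 3 == j)%:R)
        (x ord0 (inord 4) + t * (inord 4 == j)%:R) (x ord0 (inord 5) + t * (inord 5 == j)%:R);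
      Defs.dIt tP (x ord0 (inord 4) + t * (inord 4 == j)%:R) (x ord0 (inord 5) + t * (inord 5 == j)%:R)] i).
  by apply/funext => t; rewrite /Defs.field mxE !Hy.
clear Hy; rewrite !inordE //.
case: i => [[|[|[|[|[|[|//]]]]]] Hi] /=;
  rewrite ?der_dS ?der_dI ?der_dIt /Jn /=;
  case: j => [[|[|[|[|[|[|//]]]]]] Hj] /=; rewrite /= ?mulr1n ?mulr0n; ring.
Qed.
Local Open Scope complex_scope.
Lemma cubic_neg (b2 b1 b0 : R) (z : R[i]) :
  0 < b2 -> 0 < b1 -> 0 < b0 -> b0 < b2 * b1 ->
  z ^+ 3 + b2%:C * z ^+ 2 + b1%:C * z + b0%:C = 0 -> complex.Re z < 0.
Proof.
move=> h2 h1 h0 hb; case: z => x y /=.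
rewrite !exprS expr0 !mulr1.
move/eqP; rewrite eq_complex /= => /andP[/eqP Hr /eqP Hi].
rewrite ltNge; apply/negP => hx.
have : y * (3 * x * x - y * y + 2 * b2 * x + b1) = 0.
  by rewrite -Hi; ring.
move/eqP; rewrite mulf_eq0 => /orP[/eqP y0|/eqP e].
  subst y. nra.
have ey : y * y = 3 * x * x + 2 * b2 * x + b1 by lra.
have : -8 * x * x * x - 8 * b2 * x * x - (2 * b1 + 2 * b2 * b2) * x + (b0 - b1 * b2) = 0.
  rewrite -Hr.
  have -> : y * (x * y + y * x) = 2 * x * (y * y) by ring.
  have -> : x * (x * x - y * y) = x * x * x - x * (y * y) by ring.
  have -> : b2 * (x * x - y * y) = b2 * x * x - b2 * (y * y) by ring.
  rewrite ey; ring.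
nra.
Qed.

Lemma block (a u v c p : R) (z w0 w1 w2 : R[i]) :
  0 < a -> 0 < u -> 0 < v -> 0 < c -> 0 < p ->
  w0 * (- a - v)%:C + w1 * a%:C = z * w0 ->
  w0 * (- u - v)%:C + (w1 * (u - u)%:C + w2 * p%:C) = z * w1 ->
  w0 * c%:C + (w1 * (- c)%:C + w2 * (- p)%:C) = z * w2 ->
  (w0 = 0 /\ w1 = 0 /\ w2 = 0) \/ complex.Re z < 0.
Proof.
move=> ha hu hv hc hp H0 H1 H2.
rewrite subrr rmorph0 mulr0 add0r in H1.
move: H0 H1 H2; rewrite !(rmorphB, rmorphN, rmorphD) => H0 H1 H2.
set A := a%:C in H0 H1 H2 *; set U := u%:C in H0 H1 H2 *; set V := v%:C in H0 H1 H2 *.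
set C := c%:C in H0 H1 H2 *; set P := p%:C in H0 H1 H2 *.
have e0 : A * w1 - (z + A + V) * w0 = (w0 * (- A - V) + w1 * A) - z * w0 by ring.
rewrite H0 subrr in e0.
have e1 : P * w2 - z * w1 - (U + V) * w0 = (w0 * (- U - V) + w2 * P) - z * w1 by ring.
rewrite H1 subrr in e1.
have e2 : (z + P) * w2 - C * (w0 - w1) = - ((w0 * C + (w1 * (- C) + w2 * (- P))) - z * w2) by ring.
rewrite H2 subrr oppr0 in e2.
have key : (z ^+ 3 + (p + a + v)%:C * z ^+ 2 + (c * p + a * p + v * p + a * u + a * v)%:C * z
   + (v * c * p + a * (u + v) * p)%:C) * w0 =
   A * (P * ((z + P) * w2 - C * (w0 - w1)) - (z + P) * (P * w2 - z * w1 - (U + V) * w0))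
   - ((z + P) * z + P * C) * (A * w1 - (z + A + V) * w0).
  rewrite !(rmorphD, rmorphM) -/A -/U -/V -/C -/P; ring.
rewrite e0 e1 e2 !(mulr0, subrr, subr0) in key.
move/eqP: key; rewrite mulf_eq0 => /orP[/eqP q0|/eqP w00].
  right; apply: (@cubic_neg _ _ _ z _ _ _ _ q0); clear -ha hu hv hc hp.
  - lra.
  - have := mulr_gt0 hc hp; have := mulr_gt0 ha hp; have := mulr_gt0 hv hp.
    have := mulr_gt0 ha hu; have := mulr_gt0 ha hv; lra.
  - have := mulr_gt0 (mulr_gt0 hv hc) hp; have := mulr_gt0 (mulr_gt0 ha (addr_gt0 hu hv)) hp; lra.
  rewrite -subr_gt0.
  have -> : (p + a + v) * (c * p + a * p + v * p + a * u + a * v) - (v * c * p + a * (u + v) * p)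
    = p * (c * p + a * p + v * p) + a * (c * p + a * p + v * p + a * u + a * v)
      + v * (a * p + v * p + a * u + a * v) by ring.
  have hX : 0 < c * p + a * p + v * p by nra.
  have hY : 0 < c * p + a * p + v * p + a * u + a * v by nra.
  have hZ : 0 < a * p + v * p + a * u + a * v by nra.
  nra.
left.
have hA : A != 0.
  by rewrite /A; apply/eqP => /(congr1 (@complex.Re R)) /=; lra.
have hP : P != 0.
  by rewrite /P; apply/eqP => /(congr1 (@complex.Re R)) /=; lra.
rewrite w00 mulr0 subr0 in e0; move/eqP: e0; rewrite mulf_eq0 (negbTE hA) /= => /eqP w10.
rewrite w00 w10 !mulr0 !subr0 in e1; move/eqP: e1; rewrite mulf_eq0 (negbTE hP) /= => /eqP w20.
by [].
Qed.


Lemma main (betaA betaB tauI tauR tauP k IbarA IbarB : R) :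
  0 < betaA -> 0 < betaB -> 0 < tauI -> 0 < tauR -> 0 < tauP -> 0 < k ->
  1 < betaA * tauI -> 1 < betaB * tauI ->
  0 < IbarA -> expR (k * IbarA) = betaA * tauI - betaA * (tauI + tauR) * IbarA ->
  0 < IbarB -> expR (k * IbarB) = betaB * tauI - betaB * (tauI + tauR) * IbarB ->
  Defs.loc_asymp_stable (Defs.field betaA betaB tauI tauR tauP k)
                   (Defs.endemic_eq tauI tauR IbarA IbarB).
Proof.
move=> hbA hbB htI htR htP hk _ _ hIA heA hIB heB z.
rewrite (_ : Defs.jacobian _ _ = \matrix_(i, j) Jn betaA betaB tauI tauR tauP k (Defs.endemic_eq tauI tauR IbarA IbarB) i j); last first.
  by apply/matrixP => i j; rewrite mxE jacE.
move=> /eigenvalueP [v Hv vn0].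
set w := fun m : nat => v ord0 (inord m).
have Hw (i : 'I_6) : v ord0 i = w i by rewrite /w inord_val.
have Eq j : (j < 6)%N -> \sum_(i < 6) w i * (Jn betaA betaB tauI tauR tauP k (Defs.endemic_eq tauI tauR IbarA IbarB) i j)%:C = z * w j.
  move=> hj; have := congr1 (fun M : 'M[R[i]]_(1,6) => M ord0 (inord j)) Hv.
  rewrite !mxE => <-; apply: eq_bigr => i _; by rewrite !mxE Hw inordK.
have E0 := Eq 0%N isT. have E1 := Eq 1%N isT. have E2 := Eq 2%N isT.
have E3 := Eq 3%N isT. have E4 := Eq 4%N isT. have E5 := Eq 5%N isT.
move: E0 E1 E2 E3 E4 E5; rewrite !big_ord_recl !big_ord0 /= /bump /= /Jn /= /Defs.endemic_eq !mxE !inordK //=.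
rewrite !rmorph0 !mulr0 !addr0 !add0r.
have HE (b I : R) : 0 < b -> 0 < I ->
  expR (k * I) = b * tauI - b * (tauI + tauR) * I ->
  b * expR (- (k * I)) * (1 - I - tauR / tauI * I) = tauI^-1.
  move=> hb hI he.
  have he' : expR (k * I) = b * tauI * (1 - I - tauR / tauI * I) by rewrite he; field; lra.
  have hs : (1 - I - tauR / tauI * I) != 0.
    apply/eqP => hs0; have := expR_gt0 (k * I); rewrite he' hs0 mulr0; lra.
  have e : (1 - I) * tauI - tauR * I = tauI * (1 - I - tauR / tauI * I) by field; lra.
  rewrite expRN he'; field; rewrite e mulf_neq0 ?hs ?gt_eqF //.
rewrite !HE //.
set w0 := w 0%N; set w1 := w (1 + 0)%N; set w2 := w (1 + (1 + 0))%N.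
set w3 := w (1 + (1 + (1 + 0)))%N; set w4 := w (1 + (1 + (1 + (1 + 0))))%N.
set w5 := w (1 + (1 + (1 + (1 + (1 + 0)))))%N.
move=> E0 E1 E2 E3 E4 E5.
have hu : 0 < tauI^-1 by rewrite invr_gt0.
have hv : 0 < tauR^-1 by rewrite invr_gt0.
have hp : 0 < tauP^-1 by rewrite invr_gt0.
have haA : 0 < betaA * expR (- (k * IbarA)) * IbarA.
  by apply: mulr_gt0 => //; apply: mulr_gt0 => //; exact: expR_gt0.
have haB : 0 < betaB * expR (- (k * IbarB)) * IbarB.
  by apply: mulr_gt0 => //; apply: mulr_gt0 => //; exact: expR_gt0.
have hcA : 0 < tauI^-1 * IbarA * k by apply: mulr_gt0 => //; apply: mulr_gt0.
have hcB : 0 < tauI^-1 * IbarB * k by apply: mulr_gt0 => //; apply: mulr_gt0.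
have [[h0 [h1 h2]]|//] := @block _ _ _ _ _ _ _ _ _ haA hu hv hcA hp E0 E1 E2.
have [[h3 [h4 h5]]|//] := @block _ _ _ _ _ _ _ _ _ haB hu hv hcB hp E3 E4 E5.
exfalso; move/eqP: vn0; apply; apply/rowP => i; rewrite !mxE Hw.
case: i => [[|[|[|[|[|[|//]]]]]] Hi] //=.
Qed.
End S.

Theorem theorem5 (R : realType) (betaA betaB tauI tauR tauP k IbarA IbarB : R) :
  0 < betaA -> 0 < betaB -> 0 < tauI -> 0 < tauR -> 0 < tauP -> 0 < k ->
  1 < betaA * tauI -> 1 < betaB * tauI ->
  (* IbarA, IbarB : the unique positive solutions of the defining equations *)
  0 < IbarA -> expR (k * IbarA) = betaA * tauI - betaA * (tauI + tauR) * IbarA ->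
  0 < IbarB -> expR (k * IbarB) = betaB * tauI - betaB * (tauI + tauR) * IbarB ->
  loc_asymp_stable (field betaA betaB tauI tauR tauP k)
                   (endemic_eq tauI tauR IbarA IbarB).
Proof. exact: main. Qed.
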